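(* Let $n\in\mathbb{N}$ and let $p$ be a prime with $p>3$ and $n>2$. Let $x_1,\dots,x_{p-3}$ be distinct symbols not in $\{1,\dots,n\}$, and regard $A_n$ as the subgroup of $A_{n+(p-3)}=\mathrm{Alt}(\{1,\dots,n,x_1,\dots,x_{p-3}\})$ fixing every $x_i$. If $\sigma\in A_n$, then $\sigma^{-1}$ can be written as a product of $p$-cycles $\sigma^{-1}=\tau_1\tau_2\cdots\tau_t$, where $\tau_i\in A_{n+(p-3)}\setminus A_n$ for all $i=1,\dots,t$, and $\tau_i\notin\langle\tau_j\rangle$ for all $i\neq j$.
   Context: $A_{n+(p-3)}\setminus A_n$ denotes the even permutations of $\{1,\dots,n,x_1,\dots,x_{p-3}\}$ that move at least one of the $x_i$. $\langle\tau\rangle$ denotes the cyclic subgroup generated by $\tau$. (The empty product is the identity.) *)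

(* Defs.v *)
From mathcomp Require Import all_boot all_fingroup all_solvable.
Set Implicit Arguments. Unset Strict Implicit. Unset Printing Implicit Defensive.
Local Open Scope group_scope.

Definition is_cycle_of_length (T : finType) (m : nat) (s : {perm T}) : Prop :=
  exists x : T, #|porbit s x| = m /\ (forall y, y \notin porbit s x -> s y = y).

(* The ground set {1..n, x_1..x_(p-3)} is modelled as 'I_(n + (p-3));
   ordinals k < n play the role of 1..n, ordinals k >= n are the x_i. *)
Definition is_new_point (n N : nat) (k : 'I_N) : bool := n <= k.

(* Main.v *)
Require Import Defs.
From mathcomp Require Import all_boot all_fingroup all_solvable zify.
Set Implicit Arguments. Unset Strict Implicit. Unset Printing Implicit Defensive.
Local Open Scope group_scope.


Section Cyc.
Variable T : finType.
Implicit Types (s : seq T) (x y : T).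

Definition cyc s : {perm T} := perm (can_inj (prev_next (undup_uniq s))).

Lemma cycE s x : uniq s -> cyc s x = next s x.
Proof. by move=> Us; rewrite permE undup_id. Qed.

Lemma cyc_out s x : x \notin s -> cyc s x = x.
Proof. by move=> xs; rewrite permE next_nth mem_undup (negbTE xs). Qed.

Lemma cyc_iter s x i : uniq s -> (cyc s ^+ i) x = iter i (next s) x.
Proof. by move=> Us; rewrite permX; apply: eq_iter => y; rewrite cycE. Qed.

Lemma cyc_exp_size s : uniq s -> cyc s ^+ size s = 1.
Proof.
move=> Us; apply/permP => y; rewrite perm1 cyc_iter //.
have [ys|yns] := boolP (y \in s).
  by rewrite -(order_cycle (cycle_next Us) Us ys) (iter_order_cycle (cycle_next Us)).
by apply: iter_fix; rewrite next_nth (negbTE yns).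
Qed.

Lemma porbit_cyc s x : uniq s -> x \in s -> porbit (cyc s) x =i s.
Proof.
move=> Us xs y; rewrite -(fconnect_cycle (cycle_next Us) xs).
apply/porbitP/idP => [[i ->]|].
  by rewrite cyc_iter // fconnect_iter.
by move=> /iter_findex <-; exists (findex (next s) x y); rewrite cyc_iter.
Qed.

Lemma is_cycle_cyc s : uniq s -> 0 < size s -> is_cycle_of_length (size s) (cyc s).
Proof.
case: s => // x s' Us _; exists x; split.
  by rewrite (eq_card (porbit_cyc Us (mem_head _ _))) (card_uniqP Us).
by move=> y; rewrite (porbit_cyc Us (mem_head _ _)) => /cyc_out.
Qed.

Lemma next_mid s1 s2 x y : uniq (s1 ++ x :: y :: s2) ->
  next (s1 ++ x :: y :: s2) x = y.
Proof.
move=> U; rewrite -(next_rot (size s1) U) rot_size_cat /=.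
by rewrite eqxx.
Qed.

Lemma next_last s x y : uniq (y :: s ++ [:: x]) -> next (y :: s ++ [:: x]) x = y.
Proof.
move=> U; have := U; rewrite -cat1s catA => U'.
rewrite -(next_rot (size ([:: y] ++ s)) U') rot_size_cat /=.
by rewrite eqxx.
Qed.

Lemma next_neq s x : uniq s -> 1 < size s -> x \in s -> next s x != x.
Proof.
move=> Us s2 xs; have [i t Ht] := rot_to xs.
rewrite -(next_rot i Us) Ht.
have: uniq (x :: t) by rewrite -Ht rot_uniq.
have: 1 < size (x :: t) by rewrite -Ht size_rot.
case: t {Ht} => // z t _ /= /andP[]; rewrite inE negb_or eqxx /= => /andP[xz _] _.
by rewrite eq_sym.
Qed.

Lemma order_cyc s : uniq s -> prime (size s) -> #[cyc s] = size s.
Proof.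
move=> Us ps; have s1 : 1 < size s by apply: prime_gt1.
have: #[cyc s] %| size s by rewrite order_dvdn cyc_exp_size.
case: s Us ps s1 => // x s' Us ps s1.
apply/prime_nt_dvdP => //; rewrite order_eq1; apply/eqP => c1.
by have := next_neq Us s1 (mem_head _ _); rewrite -cycE // c1 perm1 eqxx.
Qed.

Lemma Alt_cyc s : uniq s -> odd (size s) -> cyc s \in 'Alt_T.
Proof.
move=> Us os; rewrite Alt_even.
have ->: cyc s = (cyc s ^+ (size s).+1./2) ^+ 2.
  rewrite -expgM; have ->: ((size s).+1./2 * 2 = (size s).+1)%N.
    by rewrite muln2 -[RHS](odd_double_half (size s).+1) /= os.
  by rewrite expgS cyc_exp_size // mulg1.
by rewrite expgS expg1 odd_permM addbb.
Qed.

End Cyc.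


Section Dec.
Variable T : finType.

Lemma next_in (s1 xs r : seq T) b x : uniq (s1 ++ xs ++ b :: r) -> x \in xs ->
  next (s1 ++ xs ++ b :: r) x = nth b (behead xs) (index x xs).
Proof.
move=> U xx; rewrite -(next_rot (size s1) U) rot_size_cat.
case: xs U xx => // x0 xs' U xx.
rewrite next_nth mem_cat mem_cat xx /=.
case: eqP => [_|ne].
  by case: xs' {U xx}.
have xs'x : x \in xs' by move: xx; rewrite inE eq_sym; case: eqP => // e; case: ne.
rewrite -catA index_cat xs'x catA -catA nth_cat.
have := xs'x; rewrite -index_mem => lt.
rewrite -/(size _ < _) in lt.
case: (ltngtP (index x xs').+1 (size xs')) => [lt2|gt2|eq2].
- exact: set_nth_default.
- by rewrite ltnNge lt in gt2.
- by rewrite eq2 subnn /= nth_default ?eq2.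
Qed.

Lemma next_last2 (s : seq T) x y w : uniq (y :: s ++ [:: w; x]) ->
  next (y :: s ++ [:: w; x]) x = y.
Proof.
have E : y :: s ++ [:: w; x] = (y :: s ++ [:: w]) ++ [:: x] by rewrite /= -catA.
rewrite E => U; rewrite -(next_rot (size (y :: s ++ [:: w])) U) rot_size_cat /=.
by rewrite eqxx.
Qed.

Lemma uniq3 (a b c x0 : T) xs' : uniq (a :: b :: c :: x0 :: xs') -> uniq [:: a; b; c].
Proof. by rewrite -[a :: _]/([:: a; b; c] ++ x0 :: xs') cat_uniq => /andP[]. Qed.

Lemma uniq_g (a b c x0 : T) xs' : uniq (a :: b :: c :: x0 :: xs') ->
  uniq (a :: (x0 :: xs') ++ [:: b; c]).
Proof. by move=> U; rewrite (perm_uniq (s2 := a :: b :: c :: x0 :: xs')) // perm_cons perm_catC. Qed.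

Lemma uniq_b (a b c x0 : T) xs' : uniq (a :: b :: c :: x0 :: xs') ->
  uniq (a :: c :: (x0 :: xs') ++ [:: b]).
Proof.
move=> U; rewrite (perm_uniq (s2 := a :: b :: c :: x0 :: xs')) // perm_cons.
by rewrite -[c :: _ ++ _]/((c :: x0 :: xs') ++ [:: b]) perm_catC.
Qed.

Lemma decomp (a b c x0 : T) xs' : uniq (a :: b :: c :: x0 :: xs') ->
  cyc [:: a; b; c] * cyc (a :: (x0 :: xs') ++ [:: b; c])
  = cyc (a :: c :: (x0 :: xs') ++ [:: b]).
Proof.
set xs := x0 :: xs' => U.
have U3 : uniq [:: a; b; c].
  by move: U; rewrite -[a :: _]/([:: a; b; c] ++ xs) cat_uniq => /andP[].
have Ug : uniq (a :: xs ++ [:: b; c]).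
  by rewrite (perm_uniq (s2 := a :: b :: c :: xs)) // perm_cons perm_catC.
have Ub : uniq (a :: c :: xs ++ [:: b]).
  by rewrite (perm_uniq (s2 := a :: b :: c :: xs)) // perm_cons
    -[c :: xs ++ _]/((c :: xs) ++ [:: b]) perm_catC.
apply/permP => x; rewrite permM !cycE //.
have nx : forall (s : seq T) y, y \notin s -> next s y = y.
  by move=> s y ys; rewrite next_nth (negbTE ys).
have [->|xa] := eqVneq x a.
  rewrite (next_mid (s1 := [::]) (s2 := [:: c]) U3).
  rewrite (next_mid (s1 := a :: xs) (s2 := [::]) Ug).
  by rewrite (next_mid (s1 := [::]) (s2 := xs ++ [:: b]) Ub).
have [->|xb] := eqVneq x b.
  rewrite (next_mid (s1 := [:: a]) (s2 := [::]) U3).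
  rewrite (next_last2 Ug).
  by rewrite (next_last (s := c :: xs) Ub).
have [->|xc] := eqVneq x c.
  rewrite (next_last (s := [:: b]) U3).
  rewrite (next_mid (s1 := [::]) (s2 := xs' ++ [:: b; c]) Ug).
  by rewrite (next_mid (s1 := [:: a]) (s2 := xs' ++ [:: b]) Ub).
have x3 : x \notin [:: a; b; c] by rewrite !inE !negb_or xa xb xc.
rewrite (nx _ _ x3).
have [xx|xnx] := boolP (x \in xs).
  rewrite (next_in (s1 := [:: a]) (r := [:: c]) Ug xx).
  by rewrite (next_in (s1 := [:: a; c]) (r := [::]) Ub xx).
move: xnx; rewrite inE negb_or => /andP[x0' x0''].
by rewrite !nx // !inE ?mem_cat !inE !negb_or ?xa ?xb ?xc ?x0' ?x0''.
Qed.
End Dec.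


Section Gen.
Variable T : finType.
Implicit Types (t r : {perm T}).

Definition Rel t r := (t \notin <[r]>) && (r \notin <[t]>).

Lemma sym_cyc t r : t \in <[r]> -> #[t] = #[r] -> r \in <[t]>.
Proof.
move=> tr o; have /eqP E : <[t]> == <[r]>.
  by rewrite eqEcard cycle_subG tr /= -/#[t] -/#[r] o.
by rewrite E cycle_id.
Qed.

Lemma sepR t r x : #[t] = #[r] -> t x = x -> r x != x -> Rel t r.
Proof.
move=> o tx rx.
have H : r \notin <[t]>.
  apply/cycleP => -[i Ei]; move: rx; rewrite Ei permX iter_fix ?eqxx //.
by rewrite /Rel H andbT; apply: contra H => /sym_cyc; apply.
Qed.

Lemma fixV t x : t x = x -> t^-1 x = x.
Proof. by move=> E; rewrite -{1}E permK. Qed.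

Lemma movV t x : t x != x -> t^-1 x != x.
Proof. by apply: contra => /eqP E; rewrite -{1}E permKV. Qed.

Lemma cycleV_len m t : is_cycle_of_length m t -> is_cycle_of_length m t^-1.
Proof.
case=> x [c f]; exists x; rewrite porbitV; split => // y /f; exact: fixV.
Qed.

End Gen.


Definition good (n p : nat) (t : {perm 'I_(n + (p - 3))}) :=
  [/\ is_cycle_of_length p t, t \in 'Alt_('I_(n + (p - 3))),
      (exists k : 'I_(n + (p - 3)), is_new_point n k && (t k != k)) & #[t] = p].

Section Main.
Variables (n p : nat) (hp : prime p) (hp3 : 3 < p) (hn : 2 < n).
Local Notation N := (n + (p - 3)).
Local Notation gd := (@good n p).

Definition xs : seq 'I_N := [seq rshift n k | k <- enum 'I_(p - 3)].

Lemma xs_uniq : uniq xs.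
Proof. by rewrite map_inj_uniq ?enum_uniq //; apply: rshift_inj. Qed.

Lemma xs_size : size xs = p - 3.
Proof. by rewrite size_map size_enum_ord. Qed.

Lemma xs_new (y : 'I_N) : y \in xs -> n <= y.
Proof. by case/mapP => k _ ->; rewrite /= leq_addr. Qed.

Lemma old_notin (y : 'I_N) : y < n -> y \notin xs.
Proof. by move=> yn; apply/negP => /xs_new; rewrite leqNgt yn. Qed.

Lemma p_odd : odd p.
Proof. by apply/negPn/negP => /(prime_oddPn hp) p2; move: hp3; rewrite p2. Qed.

Lemma good_cyc (s : seq 'I_N) : uniq s -> size s = p ->
  (exists2 k, k \in s & n <= k) -> gd (cyc s).
Proof.
move=> Us ss [k ks kn]; split.
- by rewrite -[X in is_cycle_of_length X]ss; apply: is_cycle_cyc => //; rewrite ss prime_gt0.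
- by apply: Alt_cyc; rewrite // ss p_odd.
- exists k; rewrite /is_new_point kn cycE //; apply: next_neq => //.
  by rewrite ss prime_gt1.
- by rewrite order_cyc // ss.
Qed.

Lemma good_inv (t : {perm 'I_N}) : gd t -> gd t^-1.
Proof.
case=> c a [k /andP[kn kt]] o; split.
- exact: cycleV_len.
- by rewrite groupV.
- by exists k; rewrite kn movV.
- by rewrite orderV.
Qed.

Lemma three_not (s : seq 'I_N) (r : {perm 'I_N}) :
  uniq s -> size s = 3 -> #[r] = p -> cyc s \notin <[r]>.
Proof.
move=> Us s3 o; apply/negP => /order_dvdG; rewrite -/#[r] o order_cyc // s3 //.
by move/(prime_nt_dvdP hp) => // p3; move: hp3; rewrite -p3.
Qed.

Lemma ind (j : nat) : j <= n -> forall g : {perm 'I_N},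
  g \in 'Alt_('I_N) -> (forall k : 'I_N, j <= k -> g k = k) ->
  exists taus : seq {perm 'I_N}, g = \prod_(t <- taus) t /\
    (forall t, t \in taus -> gd t /\ (forall k : 'I_N, j <= k < n -> t k = k)) /\
    pairwise (@Rel _) taus.
Proof.
elim: j => [|j IH] jn g gA gf.
  exists [::]; split; last by [].
  by rewrite big_nil; apply/permP => k; rewrite perm1 gf.
have jN : j < N by apply: leq_trans jn (leq_addr _ _).
pose J : 'I_N := Ordinal jN.
have gf' : forall k : 'I_N, j < k -> g k = k by [].
have [gJ|gJ] := eqVneq (g J) J.
  have gfj : forall k : 'I_N, j <= k -> g k = k.
    move=> k; rewrite leq_eqVlt => /orP[/eqP jk|]; last exact: gf.
    by have -> : k = J by apply: val_inj.
  have [taus [E [G P]]] := IH (ltnW jn) g gA gfj.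
  exists taus; split => //; split => // t tt; have [gt ft] := G t tt.
  by split => // k /andP[jk kn]; apply: ft; rewrite kn andbT ltnW.
set u := g J.
have uJ : u != J by [].
have ninj : forall k : 'I_N, j < k -> u != k.
  move=> k jk; apply/eqP => uk.
  have : g J = g k by rewrite -/u uk gf'.
  by move/perm_inj => Jk; move: jk; rewrite -Jk ltnn.
have uj : u < j.
  rewrite ltn_neqAle; apply/andP; split.
    by apply: contra uJ => /eqP e; apply/eqP/val_inj.
  by rewrite leqNgt; apply/negP => /ninj; rewrite eqxx.
have [l [lj lu]] : exists l : 'I_N, l < j /\ l != u.
  have N2 : 1 < N by apply: leq_trans (leq_addr _ _); apply: ltnW.
  have [j2|j1] := leqP 2 j.
    pose l0 : 'I_N := Ordinal (ltnW N2); pose l1 : 'I_N := Ordinal N2.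
    have [e|ne] := eqVneq u l0.
      by exists l1; split; [apply: leq_trans j2|rewrite e -(inj_eq val_inj)].
    by exists l0; split; [apply: leq_trans j2|rewrite eq_sym].
  exfalso.
  have j1' : j = 1%N.
    by apply/eqP; rewrite eqn_leq -ltnS j1 (leq_ltn_trans (leq0n u) uj).
  have u0 : val u = 0%N by move: uj; rewrite j1' ltnS leqn0 => /eqP.
  have gu : g u = J.
    set v := g u.
    have vu : v != u.
      apply/eqP => e; have : g u = g J by rewrite -/v e.
      by move/perm_inj => uJ'; rewrite uJ' eqxx in uJ.
    have vle : v <= j.
      rewrite leqNgt; apply/negP => jv; have := gf' _ jv.
      rewrite -{2}/v => /perm_inj vu'; by rewrite vu' eqxx in vu.
    apply/val_inj/eqP; rewrite /= eqn_leq vle /= j1' lt0n.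
    by apply: contra vu => /eqP v0; apply/eqP/val_inj; rewrite /= v0 u0.
  have gt : g = tperm J u.
    apply/permP => k; case: tpermP => [->|->|kJ ku] //.
    apply: gf'; rewrite j1'.
    have k1 : val k != 1%N by apply/eqP => k1; apply: kJ; apply/val_inj; rewrite /= k1.
    have k0 : val k != 0%N by apply/eqP => k0; apply: ku; apply/val_inj; rewrite /= k0.
    by move: k1 k0; case: k {kJ ku} => [[|[|m]] ?].
  by move: gA; rewrite gt Alt_even odd_tperm eq_sym uJ.
have lJ : l != J by apply/eqP => e; rewrite e ltnn in lj.
have [x0 [xs' Exs]] : exists x0 xs', xs = x0 :: xs'.
  case E: xs => [|x0 xs']; last by exists x0, xs'.
  by move: xs_size; rewrite E /= => /esym/eqP; rewrite subn_eq0 leqNgt hp3.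
have un : u < n := ltn_trans uj jn.
have ln : l < n := ltn_trans lj jn.
have x0n : n <= x0 by apply: xs_new; rewrite Exs mem_head.
have U : uniq (J :: u :: l :: x0 :: xs').
  have h1 := old_notin (y := J) jn; have h2 := old_notin un.
  have h3 := old_notin ln.
  rewrite -Exs /= !inE xs_uniq !negb_or h1 h2 h3.
  by rewrite (eq_sym J u) uJ (eq_sym J l) lJ (eq_sym u l) lu.
have U3 := uniq3 U; have Ug := uniq_g U; have Ub := uniq_b U.
set C := cyc [:: J; u; l].
set gam := cyc (J :: (x0 :: xs') ++ [:: u; l]).
set bet := cyc (J :: l :: (x0 :: xs') ++ [:: u]).
have D : C * gam = bet := decomp U.
have DC : C = bet * gam^-1 by rewrite -D mulgK.
have CA : C \in 'Alt_('I_N) by apply: Alt_cyc.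
have CJ : C J = u by rewrite cycE // (next_mid (s1 := [::]) (s2 := [:: l]) U3).
have out3 : forall k : 'I_N, j < k -> k \notin [:: J; u; l].
  move=> k jk; rewrite !inE !negb_or; apply/and3P; split; apply/eqP => e.
  - by rewrite e ltnn in jk.
  - by move: (ltn_trans uj jk); rewrite e ltnn.
  - by move: (ltn_trans lj jk); rewrite e ltnn.
have Cfix : forall k : 'I_N, j < k -> C k = k by move=> k /out3 /cyc_out.
set h := g * C^-1.
have hA : h \in 'Alt_('I_N) by rewrite groupM ?groupV.
have hf : forall k : 'I_N, j <= k -> h k = k.
  move=> k; rewrite leq_eqVlt => /orP[/eqP jk|jk]; rewrite permM.
    have -> : k = J by apply: val_inj.
    by rewrite -/u -CJ permK.
  by rewrite gf' // fixV // Cfix.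
have [taus [E [G P]]] := IH (ltnW jn) h hA hf.
have outs : forall k : 'I_N, j < k < n -> forall s, s \in
    [:: J :: (x0 :: xs') ++ [:: u; l]; J :: l :: (x0 :: xs') ++ [:: u]] ->
    k \notin s.
  move=> k /andP[jk kn] s; rewrite !inE => /orP[] /eqP ->;
  move: (out3 _ jk) (old_notin kn); rewrite Exs !inE !mem_cat !inE !negb_or;
  by move=> /and3P[-> -> ->] /andP[-> ->].
have sz : forall s, s \in
    [:: J :: (x0 :: xs') ++ [:: u; l]; J :: l :: (x0 :: xs') ++ [:: u]] ->
    size s = p.
  move=> s; rewrite !inE => /orP[] /eqP -> /=; rewrite size_cat /=;
  move: xs_size; rewrite Exs /= => E1; move: hp3 E1; clear; lia.
have gb : gd bet.
  apply: good_cyc => //; first by apply: sz; rewrite !inE eqxx orbT.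
  by exists x0 => //; rewrite !(inE, mem_cat) eqxx !orbT.
have gg : gd gam.
  apply: good_cyc => //; first by apply: sz; rewrite !inE eqxx.
  by exists x0 => //; rewrite !(inE, mem_cat) eqxx !orbT.
have bJ : bet J != J.
  by rewrite cycE // (next_mid (s1 := [::]) (s2 := (x0 :: xs') ++ [:: u]) Ub) lJ.
have gJ' : gam^-1 J != J.
  apply: movV; rewrite cycE // (next_mid (s1 := [::]) (s2 := xs' ++ [:: u; l]) Ug).
  by apply/eqP => e; move: x0n; rewrite e leqNgt jn.
have og : #[gam] = p by case: gg.
have ob : #[bet] = p by case: gb.
exists (taus ++ [:: bet; gam^-1]); split.
  by rewrite big_cat /= !big_cons big_nil mulg1 -DC -E /h mulgKV.
split.
  move=> t; rewrite mem_cat => /orP[tt|].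
    have [gt ft] := G t tt; split => // k /andP[jk kn]; apply: ft.
    by rewrite kn ltnW.
  rewrite !inE => /orP[] /eqP ->.
    split => // k kk; apply: cyc_out; apply: (outs k kk).
    by rewrite !inE eqxx orbT.
  split; first exact: good_inv.
  move=> k kk; apply: fixV; apply: cyc_out; apply: (outs k kk).
  by rewrite !inE eqxx.
rewrite pairwise_cat P /=; apply/andP; split.
  apply/allrelP => t r tt; have [[_ _ _ ot] ft] := G t tt.
  have tJ : t J = J by apply: ft; rewrite leqnn jn.
  rewrite !inE => /orP[] /eqP ->.
    by apply: (sepR (x := J)) => //; rewrite ob.
  by apply: (sepR (x := J)) => //; rewrite orderV og.
rewrite /= /Rel !andbT; apply/andP; split.
  apply/negP => H; have := three_not (r := gam^-1) U3 erefl.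
  by rewrite -/C DC (groupM H (cycle_id _)) orderV og => /(_ erefl).
apply/negP => H; have := three_not (r := bet) U3 erefl ob.
by rewrite -/C DC (groupM (cycle_id _) H).
Qed.
End Main.

Unset Implicit Arguments.

Theorem mainTheorem8 (n p : nat) (hp : prime p) (hp3 : 3 < p) (hn : 2 < n)
  (sigma : {perm 'I_(n + (p - 3))})
  (hsA : sigma \in 'Alt_('I_(n + (p - 3))))
  (hsfix : forall k : 'I_(n + (p - 3)), is_new_point n k -> sigma k = k) :
  exists taus : seq {perm 'I_(n + (p - 3))},
    sigma^-1 = \prod_(t <- taus) t /\
    (forall t, t \in taus ->
       [/\ is_cycle_of_length p t,
           t \in 'Alt_('I_(n + (p - 3))) &
           exists k : 'I_(n + (p - 3)), is_new_point n k && (t k != k)]) /\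
    (forall i j, i < size taus -> j < size taus -> i != j ->
       nth 1 taus i \notin <[nth 1 taus j]>).
Proof.
have [taus [E [G P]]] := ind hp hp3 hn (leqnn n) (groupVr hsA)
  (fun k nk => fixV (hsfix k nk)).
exists taus; split => //; split.
  by move=> t /G [[c a m _] _]; split.
move=> i j ilt jlt ij.
move/(pairwiseP 1): P => P'.
case: (ltngtP i j) ij => // [lij|lji] _.
  by case/andP: (P' i j ilt jlt lij).
by case/andP: (P' j i jlt ilt lji).
Qed.
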